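(* Let $a,b\in\mathbb{N}$ with $2\leq b\leq a$ and let $x_1\geq x_2\geq\cdots\geq x_b\geq 0$ be reals. Then $$(a-b+1)\,a^{\log_b x_b}+\sum_{i=1}^{b-1}a^{\log_b x_i}\leq a^{\log_b\sum_{i=1}^{b}x_i}.$$
   Context: By convention $a^{\log_b 0}=0$, so $x_b$ (and any $x_i$) may be $0$. *)

(* Defs.v *)
From mathcomp Require Import all_boot all_order all_algebra.
From mathcomp Require Import reals exp.
Set Implicit Arguments. Unset Strict Implicit. Unset Printing Implicit Defensive.
Import Order.TTheory GRing.Theory Num.Theory.
Local Open Scope ring_scope.

(* alogb a b x = a^{log_b x}, with the paper's convention a^{log_b 0} = 0.
   log_b x = ln x / ln b. *)
Definition alogb (R : realType) (a b : nat) (x : R) : R :=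
  if x == 0 then 0 else powR (a%:R) (ln x / ln (b%:R)).

(* Main.v *)
Require Import Defs.
From mathcomp Require Import all_boot all_order all_algebra.
From mathcomp Require Import all_classical interval_inference reals exp convex hoelder.
From mathcomp Require Import ring lra.
Import Order.TTheory GRing.Theory Num.Theory.
Local Open Scope ring_scope.
Local Open Scope convex_scope.

Lemma cvx (R : realType) (c t x y : R) : 1 <= c -> 0 <= t -> t <= 1 -> 0 <= x -> 0 <= y ->
  (t * x + (1 - t) * y) `^ c <= t * x `^ c + (1 - t) * y `^ c.
Proof.
move=> c1 t0 t1 x0 y0.
have := @convex_powR R c c1 (Itv01 t0 t1) x y.
rewrite !inE /= !in_itv /= !andbT => /(_ x0 y0).
by rewrite !convRE /=.
Qed.

Lemma key (R : realType) (c w u v : R) : 1 <= c -> 0 <= w -> w <= u -> 0 <= v ->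
  (w + v) `^ c + u `^ c <= w `^ c + (u + v) `^ c.
Proof.
move=> c1 w0 wu v0.
set L := u + v - w.
have [L0|Lpos] := eqVneq L 0.
  have uw : u = w by rewrite /L in L0; lra.
  have v00 : v = 0 by rewrite /L in L0; lra.
  by rewrite uw v00 addr0 addrC.
have Lp : 0 < L by rewrite lt_neqAle eq_sym Lpos /L; lra.
have u0 : 0 <= u by lra.
have uv0 : 0 <= u + v by lra.
have h1 := @cvx R c (v / L) w (u + v) c1 (divr_ge0 v0 (ltW Lp)).
have wu' : 0 <= u - w by lra.
have h2 := @cvx R c ((u - w) / L) w (u + v) c1 (divr_ge0 wu' (ltW Lp)).
have e1 : v / L * w + (1 - v / L) * (u + v) = u.
  by rewrite /L; field; rewrite -/L Lpos.
have e2 : (u - w) / L * w + (1 - (u - w) / L) * (u + v) = w + v.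
  by rewrite /L; field; rewrite -/L Lpos.
rewrite e1 in h1; rewrite e2 in h2.
have t1 : v / L <= 1 by rewrite ler_pdivrMr // mul1r /L; lra.
have t2 : (u - w) / L <= 1 by rewrite ler_pdivrMr // mul1r /L; lra.
have s : v / L + (u - w) / L = 1 by rewrite /L; field; rewrite -/L Lpos.
have := h1 t1 w0 uv0; have := h2 t2 w0 uv0.
have s' : (u - w) / L = 1 - v / L by rewrite -s; ring.
rewrite s'.
set p := v / L; set A := w `^ c; set B := (u + v) `^ c.
move=> H2 H1.
have : (w + v) `^ c + u `^ c <= (1 - p) * A + (1 - (1 - p)) * B + (p * A + (1 - p) * B).
  exact: lerD.
suff -> : (1 - p) * A + (1 - (1 - p)) * B + (p * A + (1 - p) * B) = A + B by [].
ring.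
Qed.

Lemma tel (R : realType) (c B t : R) (d : nat -> R) (K : nat) : 1 <= c -> 0 <= t -> t <= B ->
  (forall i, (1 <= i)%N -> (i <= K)%N -> 0 <= d i) ->
  forall k, (k <= K)%N ->
  B `^ c + \sum_(1 <= i < k.+1) (t + d i) `^ c <=
  (B + \sum_(1 <= i < k.+1) d i) `^ c + k%:R * t `^ c.
Proof.
move=> c1 t0 tB d0; elim=> [|k IH] kK.
  by rewrite !big_geq // !addr0 mul0r addr0.
have IH' := IH (ltnW kK).
rewrite !(big_nat_recr k.+1 1) //=.
have D0 : 0 <= \sum_(1 <= i < k.+1) d i.
  rewrite big_nat_cond; apply: sumr_ge0 => i /andP[/andP[i1 ik] _].
  by apply: d0 => //; apply: leq_trans (ltnW kK).
have dk : 0 <= d k.+1 by apply: d0.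
have tu : t <= B + \sum_(1 <= i < k.+1) d i by lra.
have := @key R c t (B + \sum_(1 <= i < k.+1) d i) (d k.+1) c1 t0 tu dk.
rewrite -natr1 mulrDl mul1r -addrA => H.
lra.
Qed.

Lemma mono (R : realType) (b : nat) (x : nat -> R) :
  (forall i : nat, (1 <= i)%N -> (i < b)%N -> x i.+1 <= x i) ->
  forall n i, (1 <= i)%N -> (i + n <= b)%N -> x (i + n)%N <= x i.
Proof.
move=> h; elim=> [|n IH] i i1 ib; first by rewrite addn0.
rewrite addnS; apply: le_trans (IH i i1 (ltnW _)); last by rewrite -addnS.
apply: h; first by apply: leq_trans (leq_addr _ _).
by rewrite -addnS.
Qed.

Lemma alogbE (R : realType) (a b : nat) (y : R) : (2 <= b)%N -> (b <= a)%N -> 0 <= y ->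
  alogb a b y = y `^ (ln (a%:R : R) / ln (b%:R)).
Proof.
move=> b2 ba y0; rewrite /alogb.
have lb : 0 < ln (b%:R : R) by apply: ln_gt0; rewrite ltr1n.
have la : 0 < ln (a%:R : R) by apply: ln_gt0; rewrite ltr1n (leq_trans b2 ba).
have [->|yn0] := eqVneq y 0; first by rewrite powR0 // mulf_neq0 ?gt_eqF ?invr_gt0.
have a0 : (a%:R : R) != 0 by rewrite pnatr_eq0 -lt0n (leq_trans _ ba) // (leq_trans _ b2).
rewrite /powR (negbTE a0) (negbTE yn0); f_equal; ring.
Qed.

Theorem lemma10 (R : realType) (a b : nat) (x : nat -> R) :
  (2 <= b)%N -> (b <= a)%N ->
  (forall i : nat, (1 <= i)%N -> (i < b)%N -> x i.+1 <= x i) ->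
  0 <= x b ->
  (a - b + 1)%:R * alogb a b (x b) + \sum_(1 <= i < b) alogb a b (x i)
    <= alogb a b (\sum_(1 <= i < b.+1) x i).
Proof.
move=> b2 ba hx xb0.
set t := x b.
have xi : forall i, (1 <= i)%N -> (i <= b)%N -> t <= x i.
  move=> i i1 ib; have := @mono R b x hx (b - i)%N i i1; rewrite subnKC //.
  by apply.
set c := ln (a%:R : R) / ln (b%:R).
have lb : 0 < ln (b%:R : R) by apply: ln_gt0; rewrite ltr1n.
have c1 : 1 <= c.
  rewrite /c ler_pdivlMr // mul1r ler_ln ?posrE ?ltr0n ?ler_nat //.
    by rewrite (leq_trans _ b2).
  by rewrite (leq_trans _ (leq_trans b2 ba)).
have bc : (b%:R : R) `^ c = a%:R.
  have b0 : (b%:R : R) != 0 by rewrite pnatr_eq0 -lt0n (leq_trans _ b2).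
  rewrite /powR (negbTE b0) /c mulfVK ?gt_eqF // lnK // posrE ltr0n.
  by rewrite (leq_trans _ (leq_trans b2 ba)).
have S0 : 0 <= \sum_(1 <= i < b.+1) x i.
  rewrite big_nat_cond; apply: sumr_ge0 => i /andP[/andP[i1 ib] _].
  by apply: le_trans xb0 (xi i i1 _).
rewrite !alogbE // -/c.
rewrite (@eq_big_nat _ _ _ 1 b _ (fun i => x i `^ c)); last first.
  move=> i /andP[i1 ib]; rewrite alogbE //; apply: le_trans xb0 (xi i i1 (ltnW ib)).
have b1 : (1 <= b)%N by apply: leq_trans b2.
have := @tel R c (b%:R * t) t (fun i => x i - t) b.-1 c1 xb0 _ _ b.-1 (leqnn _).
rewrite prednK //.
have tB : t <= b%:R * t.
  have : (1 : R) <= b%:R by rewrite ler1n.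
  by move=> h1; rewrite -{1}(mul1r t); apply: ler_wpM2r.
move=> /(_ tB) H.
have H' : forall i, (1 <= i)%N -> (i <= b.-1)%N -> 0 <= x i - t.
  move=> i i1 ib; rewrite subr_ge0; apply: xi => //.
  by apply: leq_trans ib (leq_pred _).
have {H H'} := H H'.
have E2 : \sum_(1 <= i < b) (t + (x i - t)) `^ c = \sum_(1 <= i < b) x i `^ c.
  by apply: eq_bigr => i _; rewrite addrC subrK.
move=> /= H; move: H; rewrite E2.
have -> : b%:R * t + \sum_(1 <= i < b) (x i - t) = \sum_(1 <= i < b.+1) x i.
  rewrite big_nat_recr //= sumrB sumr_const_nat -[t *+ _]mulr_natl natrB //.
  rewrite /t; ring.
rewrite powRM ?ler0n // bc -subn1 natrB //.
move=> H; rewrite natrD natrB //.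
set T := t `^ c in H *.
have e1 : (a%:R - b%:R + 1) * T = a%:R * T - b%:R * T + T by ring.
have e2 : (b%:R - 1) * T = b%:R * T - T by ring.
rewrite e2 in H; rewrite e1; lra.
Qed.
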